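(* Let $N\in SUT$ be continuous, $k\ge1$, and let $\mathcal N_{[k]}:\mathcal I\to\mathbb R^{(k+1)l\times(k+1)l}$ be the block lower triangular matrix function with diagonal blocks $N$, subdiagonal blocks $I+M_{i+1,i}$ ($i=1,\dots,k$), blocks $M_{i,j}$ for $i\ge j+2$, and zero blocks above the diagonal, where all $M_{i,j}:\mathcal I\to\mathbb R^{l\times l}$ are continuous elements of $SUT$. Then there exist continuous $\tilde N_2,\dots,\tilde N_{k+1}\in SUT$, each having the same secondary diagonal blocks as $N$ (i.e. $(\tilde N_s)_{i,i+1}=N_{i,i+1}$), such that $\ker\mathcal N_{[k]}=\{(y_0,\dots,y_k)\in\mathbb R^{(k+1)l}: N\tilde N_2\cdots\tilde N_{k+1}y_k=0,\ y_i=(-1)^{k+1-i}\tilde N_{i+1}\cdots\tilde N_{k+1}y_k,\ i=0,\dots,k-1\}$, so that $\dim\ker\mathcal N_{[k]}=\dim\ker N\tilde N_2\cdots\tilde N_{k+1}$ and $\operatorname{rank}\mathcal N_{[k]}=kl+\operatorname{rank}N\tilde N_2\cdots\tilde N_{k+1}$. If moreover $N\in SUT_{column}$ or $N\in SUT_{row}$, then $\operatorname{rank}\mathcal N_{[k]}=kl+\operatorname{rank}N^{k+1}$, which is constant on $\mathcal I$.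
   Context: $SUT=SUT(l,\nu,l_1,\dots,l_\nu)$ ($\nu\ge2$, $l_i\ge1$, $l=\sum l_i$) denotes the set of matrix functions $N:\mathcal I\to\mathbb R^{l\times l}$ partitioned into blocks $N_{ij}$ of size $l_i\times l_j$ with $N_{ij}=0$ for $i\ge j$. $SUT_{column}$ (when $l_1\ge\dots\ge l_\nu$): $N\in SUT$ with $\operatorname{rank}N_{i,i+1}=l_{i+1}$ pointwise, $i=1,\dots,\nu-1$; $SUT_{row}$ (when $l_1\le\dots\le l_\nu$): $N\in SUT$ with $\operatorname{rank}N_{i,i+1}=l_i$ pointwise. *)

(* Defs.v *)
From HB Require Import structures.
From mathcomp Require Import all_boot all_order all_algebra.
From mathcomp Require Import all_classical all_reals all_analysis.
Set Implicit Arguments. Unset Strict Implicit. Unset Printing Implicit Defensive.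
Import Order.TTheory GRing.Theory Num.Theory.
Import numFieldNormedType.Exports.
Local Open Scope classical_set_scope.
Local Open Scope ring_scope.

Section Defs.
Variable R : realType.

(* The block structure: nu blocks of sizes p 0, ..., p (nu-1) (the paper's
   l_1, ..., l_nu); total size l = \sum_i p i. *)
Definition bsize (nu : nat) (p : 'I_nu -> nat) : nat := \sum_(i < nu) p i.

Definition mxcont (I : interval R) (m n : nat) (F : R -> 'M[R]_(m, n)) : Prop :=
  forall i j, {within [set` I], continuous (fun t => F t i j)}.

Definition SUT (I : interval R) (nu : nat) (p : 'I_nu -> nat)
    (F : R -> 'M[R]_(bsize p)) : Prop :=
  forall t, t \in I -> forall i j : 'I_nu, (j <= i)%N ->
    submxblock (F t) i j = 0.

Definition SUT_column (I : interval R) (nu : nat) (p : 'I_nu -> nat)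
    (F : R -> 'M[R]_(bsize p)) : Prop :=
  (forall i j : 'I_nu, (i <= j)%N -> (p j <= p i)%N) /\ SUT I F /\
  forall t, t \in I -> forall i j : 'I_nu, j = i.+1 :> nat ->
    \rank (submxblock (F t) i j) = p j.

Definition SUT_row (I : interval R) (nu : nat) (p : 'I_nu -> nat)
    (F : R -> 'M[R]_(bsize p)) : Prop :=
  (forall i j : 'I_nu, (i <= j)%N -> (p i <= p j)%N) /\ SUT I F /\
  forall t, t \in I -> forall i j : 'I_nu, j = i.+1 :> nat ->
    \rank (submxblock (F t) i j) = p i.

Definition bigNk (n k : nat) (N : 'M[R]_n) (M : nat -> nat -> 'M[R]_n)
    : 'M[R]_(\sum_(i < k.+1) n) :=
  \mxblock_(i < k.+1, j < k.+1)
    (if i == j :> nat then N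
     else if i == j.+1 :> nat then 1%:M + M i j
     else if (j.+2 <= i)%N then M i j
     else 0).

Definition mxprod (n : nat) (a b : nat) (A : nat -> 'M[R]_n) : 'M[R]_n :=
  \big[mulmx/1%:M]_(a <= s < b) A s.

Definition mxpow (n : nat) (A : 'M[R]_n) (e : nat) : 'M[R]_n :=
  iter e (mulmx A) 1%:M.

End Defs.

(* Main.v *)
Require Import Defs.
From HB Require Import structures.
From mathcomp Require Import all_boot all_order all_algebra.
From mathcomp Require Import all_classical all_reals all_analysis.
From mathcomp Require Import zify.
Import Order.TTheory GRing.Theory Num.Theory.
Import numFieldNormedType.Exports.
Local Open Scope ring_scope.
Set Implicit Arguments. Unset Strict Implicit. Unset Printing Implicit Defensive.

Section SUTalg.
Variable R : realType.
Variable nu : nat.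
Variable p : 'I_nu -> nat.
Local Notation n := (bsize p).
Local Notation blk A i j := (@submxblock R nu nu p p A i j).

Definition sutd (d : nat) (A : 'M[R]_n) :=
  forall i j : 'I_nu, (j < i + d)%N -> blk A i j = 0.

Lemma submxblockM (A B : 'M[R]_n) i j :
  blk (A *m B) i j = \sum_l blk A i l *m blk B l j.
Proof.
by rewrite -{1}[A]submxblockK -{1}[B]submxblockK mul_mxblock mxblockK.
Qed.

Lemma sutdM a b A B : sutd a A -> sutd b B -> sutd (a + b) (A *m B).
Proof.
move=> hA hB i j lt; rewrite submxblockM big1 // => l _.
case: (ltnP l (i + a)) => h; first by rewrite hA // mul0mx.
by rewrite hB ?mulmx0 //; lia.
Qed.

Lemma sutdD d A B : sutd d A -> sutd d B -> sutd d (A + B).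
Proof. by move=> hA hB i j lt; rewrite submxblockD hA ?hB ?addr0. Qed.

Lemma sutdN d A : sutd d A -> sutd d (- A).
Proof. by move=> hA i j lt; rewrite submxblockN hA ?oppr0. Qed.

Lemma sutd0 d : sutd d 0.
Proof. by move=> i j _; rewrite submxblock0. Qed.

Lemma submxblockZ (c : R) (A : 'M[R]_n) i j : blk (c *: A) i j = c *: blk A i j.
Proof. by apply/matrixP => r s; rewrite !mxE. Qed.

Lemma sutdZ d c A : sutd d A -> sutd d (c *: A).
Proof. by move=> hA i j lt; rewrite submxblockZ hA ?scaler0. Qed.

Lemma sutd_sum d (I : finType) (P : pred I) (F : I -> 'M[R]_n) :
  (forall k, P k -> sutd d (F k)) -> sutd d (\sum_(k | P k) F k).
Proof.
move=> h; apply: (big_ind (sutd d)); [exact: sutd0| exact: sutdD | by []].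
Qed.

Lemma sutd_le d d' A : (d' <= d)%N -> sutd d A -> sutd d' A.
Proof. by move=> le hA i j lt; apply: hA; lia. Qed.

Lemma sutd_nu A : sutd nu A -> A = 0.
Proof.
move=> hA; apply/mxblockP => i j; rewrite submxblock0; apply: hA.
have := ltn_ord j; lia.
Qed.

Lemma sutd_id : sutd 0 1%:M.
Proof.
move=> i j lt; apply/matrixP => r s; rewrite !mxE.
case: eqP => // e; have := congr1 tagnat.sig1 e; rewrite !tagnat.Rank1K.
by move=> eij; move: lt; rewrite eij addn0 ltnn.
Qed.

Lemma sutdX X m : sutd 1 X -> sutd m (X ^+ m).
Proof.
move=> hX; elim: m => [|m IH]; first by rewrite expr0 -idmxE; exact: sutd_id.
by rewrite exprS -mulmxE -add1n; apply: sutdM.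
Qed.

Definition uinv (X : 'M[R]_n) : 'M[R]_n := \sum_(m < nu) (- X) ^+ m.

Lemma uinvK X : sutd 1 X -> (1 + X) * uinv X = 1 /\ uinv X * (1 + X) = 1.
Proof.
move=> hX.
have hY : sutd 1 (- X) by exact: sutdN.
have Y0 : (- X) ^+ nu = 0 by apply: sutd_nu; exact: sutdX.
have e := subrX1 (- X) nu; rewrite Y0 sub0r in e.
have c : GRing.comm (- X) (uinv X).
  rewrite /GRing.comm /uinv mulr_suml mulr_sumr; apply: eq_bigr => m _.
  by rewrite -exprS -exprSr.
have L : (1 + X) * uinv X = 1.
  by apply: oppr_inj; rewrite e -mulNr opprD addrC.
split => //; rewrite -{2}L mulrDr mulrDl mul1r mulr1; congr (_ + _).
by apply: oppr_inj; rewrite -mulrN -mulNr c.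
Qed.

Lemma uinv_sub1 X : (0 < nu)%N -> sutd 1 X -> sutd 1 (uinv X - 1).
Proof.
move=> nu0 hX; rewrite /uinv (bigD1 (Ordinal nu0)) //= expr0 addrC addrK.
apply: sutd_sum => m hm.
have m1 : (1 <= m)%N by move: hm; rewrite -val_eqE /=; case: (nat_of_ord m).
apply: (sutd_le m1); apply: sutdX; exact: sutdN.
Qed.

End SUTalg.

Section Cont.
Variable R : realType.
Variable I : interval R.
Local Open Scope classical_set_scope.
Definition cw (f : R -> R) := {within [set` I], continuous f}.
Lemma cwD f g : cw f -> cw g -> cw (fun t => f t + g t).
Proof. move=> hf hg x; apply: cvgD; [exact: hf|exact: hg]. Qed.
Lemma cwM f g : cw f -> cw g -> cw (fun t => f t * g t).
Proof. move=> hf hg x; apply: cvgM; [exact: hf|exact: hg]. Qed.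
Lemma cwC c : cw (fun=> c).
Proof. move=> x; exact: cvg_cst. Qed.
Lemma cwN f : cw f -> cw (fun t => - f t).
Proof. move=> hf x; apply: cvgN; exact: hf. Qed.
Lemma cw_sum (J : eqType) (s : seq J) (P : pred J) (f : J -> R -> R) :
  (forall j, cw (f j)) -> cw (fun t => \sum_(j <- s | P j) f j t).
Proof.
move=> h; elim: s => [|a s IH].
  by under eq_fun do rewrite big_nil; exact: cwC.
under eq_fun do rewrite big_cons.
case: (P a); last exact: IH.
exact: cwD.
Qed.
Lemma cw_ext f g : (forall t, f t = g t) -> cw f -> cw g.
Proof. by move=> e; have -> : f = g by apply/funext. Qed.
Local Close Scope classical_set_scope.

Lemma mxcontD m1 m2 (F G : R -> 'M[R]_(m1, m2)) :
  mxcont I F -> mxcont I G -> mxcont I (fun t => F t + G t).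
Proof. by move=> hF hG i j; apply: (@cw_ext (fun t => F t i j + G t i j)) => [t|]; [rewrite mxE|exact: cwD]. Qed.
Lemma mxcontN m1 m2 (F : R -> 'M[R]_(m1, m2)) :
  mxcont I F -> mxcont I (fun t => - F t).
Proof. by move=> hF i j; apply: (@cw_ext (fun t => - F t i j)) => [t|]; [rewrite mxE|exact: cwN]. Qed.
Lemma mxcontC m1 m2 (A : 'M[R]_(m1, m2)) : mxcont I (fun _ => A).
Proof. by move=> i j; exact: cwC. Qed.
Lemma mxcontZ m1 m2 c (F : R -> 'M[R]_(m1, m2)) :
  mxcont I F -> mxcont I (fun t => c *: F t).
Proof. by move=> hF i j; apply: (@cw_ext (fun t => c * F t i j)) => [t|]; [rewrite mxE|apply: cwM => //; exact: cwC]. Qed.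
Lemma mxcontM m1 m2 m3 (F : R -> 'M[R]_(m1, m2)) (G : R -> 'M[R]_(m2, m3)) :
  mxcont I F -> mxcont I G -> mxcont I (fun t => F t *m G t).
Proof.
move=> hF hG i j; apply: (@cw_ext (fun t => \sum_l F t i l * G t l j)) => [t|].
  by rewrite mxE.
by apply: cw_sum => l; apply: cwM.
Qed.
Lemma mxcont_sum m1 m2 (J : eqType) (s : seq J) (P : pred J)
    (F : J -> R -> 'M[R]_(m1, m2)) :
  (forall j, mxcont I (F j)) -> mxcont I (fun t => \sum_(j <- s | P j) F j t).
Proof.
move=> h i j; apply: (@cw_ext (fun t => \sum_(l <- s | P l) F l t i j)) => [t|].
  by rewrite summxE.
by apply: cw_sum => l; exact: h.
Qed.
Lemma mxcont_prod m (J : eqType) (s : seq J) (F : J -> R -> 'M[R]_m) :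
  (forall j, mxcont I (F j)) ->
  mxcont I (fun t => \big[mulmx/1%:M]_(j <- s) F j t).
Proof.
move=> h; elim: s => [|a s IH].
  by under eq_fun do rewrite big_nil; exact: mxcontC.
under eq_fun do rewrite big_cons.
exact: mxcontM.
Qed.
Lemma mxcontX m (F : R -> 'M[R]_m) e :
  mxcont I F -> mxcont I (fun t => F t ^+ e).
Proof.
move=> h; elim: e => [|e IH].
  by under eq_fun do rewrite expr0; exact: mxcontC.
by under eq_fun do rewrite exprS -mulmxE; exact: mxcontM.
Qed.
End Cont.

Section Constr.
Variable R : realType.
Variable nu : nat.
Variable p : 'I_nu -> nat.
Local Notation n := (bsize p).
Variable Nt : 'M[R]_n.
Variable Mt : nat -> nat -> 'M[R]_n.

Definition Xc (Q : nat -> 'M[R]_n) (i : nat) : 'M[R]_n :=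
  Mt i i.-1 + \sum_(j < i.-1) ((-1) ^+ (i.-1 - j)) *: (Mt i j *m mxprod j.+2 i.+1 Q).

Fixpoint Gs (i : nat) : nat -> 'M[R]_n :=
  if i is i'.+1 then
    (fun s => if s == i'.+2 then uinv (p:=p) (Xc (Gs i') i'.+1) *m Nt else Gs i' s)
  else (fun _ => 0).

Lemma Gs_prefix i i' s : (i <= i')%N -> (s <= i.+1)%N -> Gs i' s = Gs i s.
Proof.
move=> le hs; elim: i' le => [|i' IH] le.
  by have -> : i = 0%N by lia.
case: (ltnP i i'.+1) => h; last by have -> : i = i'.+1 by lia.
rewrite /=; case: eqP => [e|_]; first lia.
by apply: IH; lia.
Qed.

Lemma mxprodE a b (Q : nat -> 'M[R]_n) : mxprod a b Q = \prod_(a <= s < b) Q s.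
Proof. by []. Qed.

Lemma mxprod_recr a b (Q : nat -> 'M[R]_n) : (a <= b)%N -> mxprod a b.+1 Q = mxprod a b Q *m Q b.
Proof. by move=> le; rewrite !mxprodE big_nat_recr //= mulmxE. Qed.

Lemma mxprod_nil a (Q : nat -> 'M[R]_n) : mxprod a a Q = 1%:M.
Proof. by rewrite mxprodE big_geq // idmxE. Qed.

Lemma eq_mxprod a b (Q Q' : nat -> 'M[R]_n) : (forall s, (a <= s < b)%N -> Q s = Q' s) ->
  mxprod a b Q = mxprod a b Q'.
Proof. by move=> h; rewrite !mxprodE; apply: eq_big_nat. Qed.

Lemma Gs_step i k : (i.+1 <= k)%N ->
  Gs k i.+2 = uinv (p:=p) (Xc (Gs k) i.+1) *m Nt.
Proof.
move=> le; rewrite (@Gs_prefix i.+1) //= eqxx; congr (uinv _ *m _).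
rewrite /Xc; congr (_ + _); apply: eq_bigr => j _; congr (_ *: (_ *m _)).
apply: eq_mxprod => s hs; rewrite (@Gs_prefix i) //; lia.
Qed.

End Constr.

Section Props.
Variable R : realType.
Variable nu : nat.
Variable p : 'I_nu -> nat.
Local Notation n := (bsize p).
Local Notation blk A i j := (@submxblock R nu nu p p A i j).
Variable Nt : 'M[R]_n.
Variable Mt : nat -> nat -> 'M[R]_n.
Variable k : nat.
Hypothesis nu0 : (0 < nu)%N.
Hypothesis hN : sutd 1 Nt.
Hypothesis hM : forall i j, (j < i <= k)%N -> sutd 1 (Mt i j).

Lemma sutd_mxprod a b (Q : nat -> 'M[R]_n) :
  (forall s, sutd 0 (Q s)) -> sutd 0 (mxprod a b Q).
Proof.
move=> h; rewrite /mxprod; elim: (index_iota a b) => [|s r IH].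
  by rewrite big_nil; exact: sutd_id.
by rewrite big_cons; exact: (sutdM (h s) IH).
Qed.

Lemma Xc_sutd (Q : nat -> 'M[R]_n) i : (0 < i <= k)%N ->
  (forall s, sutd 1 (Q s)) -> sutd 1 (Xc Mt Q i).
Proof.
move=> hi hQ; apply: sutdD; first by apply: hM; lia.
apply: sutd_sum => j _; apply: sutdZ; rewrite -[1%N]addn0; apply: sutdM.
  by apply: hM; have := ltn_ord j; lia.
by apply: sutd_mxprod => s; apply: (@sutd_le _ _ _ 1).
Qed.

Lemma uinv_sutd0 (X : 'M[R]_n) : sutd 1 X -> sutd 0 (uinv X).
Proof.
move=> hX; rewrite -(subrK 1 (uinv X)); apply: sutdD.
  exact: (sutd_le _ (uinv_sub1 nu0 hX)).
by rewrite -idmxE; exact: sutd_id.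
Qed.

Lemma super_uinv (X : 'M[R]_n) (i j : 'I_nu) : sutd 1 X -> j = i.+1 :> nat ->
  blk (uinv X *m Nt) i j = blk Nt i j.
Proof.
move=> hX e; rewrite -{1}(subrK 1 (uinv X)) mulmxDl -idmxE mul1mx submxblockD.
rewrite (sutdM (uinv_sub1 nu0 hX) hN) ?add0r //=; lia.
Qed.

Lemma Gs_sutd k' s : (k' <= k)%N -> sutd 1 (Gs Nt Mt k' s).
Proof.
elim: k' s => [|k' IH] s le /=; first exact: sutd0.
case: eqP => _; last by apply: IH; lia.
rewrite -[1%N]add0n; apply: sutdM => //; apply: uinv_sutd0.
by apply: Xc_sutd; [lia| move=> s'; apply: IH; lia].
Qed.

Lemma Gs_super k' s : (k' <= k)%N -> (2 <= s <= k'.+1)%N ->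
  forall i j : 'I_nu, j = i.+1 :> nat -> blk (Gs Nt Mt k' s) i j = blk Nt i j.
Proof.
elim: k' s => [|k' IH] s le hs i j e /=; first lia.
case: eqP => es.
  apply: super_uinv => //; apply: Xc_sutd; [lia| move=> s'; apply: Gs_sutd; lia].
by apply: IH => //; lia.
Qed.

Variable Y : nat -> 'cV[R]_n.
Local Notation Q := (Gs Nt Mt k).

Definition rowe (i : nat) : 'cV[R]_n :=
  Nt *m Y i + (if i is i'.+1 then Y i' else 0) + \sum_(j < i) Mt i j *m Y j.

Definition RHSi (i : nat) := forall j, (j < i)%N ->
  Y j = (-1) ^+ (i - j) *: (mxprod j.+2 i.+2 Q *m Y i).

Lemma rowe_eq i : RHSi i ->
  rowe i.+1 = Nt *m Y i.+1 + (1%:M + Xc Mt Q i.+1) *m Y i.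
Proof.
move=> h; rewrite /rowe big_ord_recr /= mulmxDl mul1mx -!addrA; congr (_ + _).
rewrite /Xc /= mulmxDl mulmx_suml; congr (_ + _).
rewrite addrC; congr (_ + _); apply: eq_bigr => j _.
by rewrite (h j (ltn_ord j)) -scalemxAl -scalemxAr mulmxA.
Qed.

Lemma kerind i : (i <= k)%N ->
  (forall i', (1 <= i' <= i)%N -> rowe i' = 0) <-> RHSi i.
Proof.
elim: i => [|i IH] le.
  by split => [_ j hj|_ i' hi']; lia.
have IH' := IH (ltnW le).
set X := Xc Mt Q i.+1.
have hX : sutd 1 X by apply: Xc_sutd; [lia| move=> s'; apply: Gs_sutd].
have [K1 K2] := uinvK hX.
have K1' : (1%:M + X) *m uinv X = 1%:M by rewrite idmxE mulmxE K1.
have K2' : uinv X *m (1%:M + X) = 1%:M by rewrite idmxE mulmxE K2.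
have step : Q i.+2 = uinv X *m Nt by rewrite (Gs_step _ _ le).
have P1 : mxprod i.+2 i.+3 Q = Q i.+2 by rewrite mxprod_recr // mxprod_nil mul1mx.
have comb : forall j, (j < i)%N ->
   (-1) ^+ (i - j) *: (mxprod j.+2 i.+2 Q *m (- (Q i.+2 *m Y i.+1))) =
   (-1) ^+ (i.+1 - j) *: (mxprod j.+2 i.+3 Q *m Y i.+1).
  move=> j hj; rewrite (mxprod_recr (a:=j.+2) (b:=i.+2)); last lia.
  rewrite subSn; last lia.
  by rewrite exprS mulN1r scaleNr -scalerN mulmxN mulmxA.
split.
- move=> H.
  have Ri : RHSi i by apply/IH' => i' hi'; apply: H; lia.
  have r0 : rowe i.+1 = 0 by apply: H; lia.
  rewrite rowe_eq // in r0.
  have Yi : Y i = - (Q i.+2 *m Y i.+1).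
    rewrite step -mulmxA -mulmxN.
    have -> : - (Nt *m Y i.+1) = (1%:M + X) *m Y i.
      by apply/eqP; rewrite eq_sym -subr_eq0 opprK addrC r0.
    by rewrite mulmxA K2' mul1mx.
  move=> j hj; case: (ltnP j i) => hji.
    by rewrite (Ri j hji) Yi comb.
  have -> : j = i by lia.
  by rewrite Yi subSn // subnn expr1 scaleN1r P1.
- move=> H.
  have Yi : Y i = - (Q i.+2 *m Y i.+1).
    by rewrite (H i (ltnSn i)) subSn // subnn expr1 scaleN1r P1.
  have Ri : RHSi i.
    by move=> j hj; rewrite Yi comb // -H //; lia.
  move=> i' hi'; case: (ltnP i' i.+1) => h.
    by apply: (proj2 IH' Ri); lia.
  have -> : i' = i.+1 by lia.
  by rewrite rowe_eq // Yi step mulmxN !mulmxA K1' mul1mx subrr.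
Qed.

End Props.

Section Ker.
Variable R : realType.
Variable nu : nat.
Variable p : 'I_nu -> nat.
Local Notation n := (bsize p).
Variable Nt : 'M[R]_n.
Variable Mt : nat -> nat -> 'M[R]_n.
Variable k : nat.
Hypothesis nu0 : (0 < nu)%N.
Hypothesis hN : sutd 1 Nt.
Hypothesis hM : forall i j, (j < i <= k)%N -> sutd 1 (Mt i j).
Hypothesis k1 : (1 <= k)%N.

Local Notation NN := (bigNk k Nt Mt).
Local Notation Q := (Gs Nt Mt k).

Lemma bterm (i j : nat) (w : 'cV[R]_n) :
  (if i == j then Nt else if i == j.+1 then 1%:M + Mt i j
   else if (j.+2 <= i)%N then Mt i j else 0) *m w =
  (if i == j then Nt *m w else 0) + (if i == j.+1 then w else 0) +
  (if (j < i)%N then Mt i j *m w else 0).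
Proof.
case: (ltngtP i j) => h.
- have -> : (i == j.+1) = false by apply/eqP; lia.
  have -> : (j.+2 <= i)%N = false by lia.
  by rewrite mul0mx !addr0.
- rewrite ?h; case: eqP => e.
    by rewrite mulmxDl mul1mx add0r.
  have -> : (j.+2 <= i)%N = true by lia.
  by rewrite add0r ?addr0 ?add0r.
- rewrite h; have -> : (j == j.+1) = false by apply/eqP; lia.
  by rewrite !addr0.
Qed.

Definition Yof (y : 'cV[R]_(\sum_(i < k.+1) n)) (j : nat) : 'cV[R]_n :=
  submxcol y (@inord k j).

Lemma NN_rows (y : 'cV[R]_(\sum_(i < k.+1) n)) :
  NN *m y = 0 <-> forall i : 'I_k.+1, rowe Nt Mt (Yof y) i = 0.
Proof.
have E : NN *m y = \mxcol_(i < k.+1) rowe Nt Mt (Yof y) i.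
  rewrite /bigNk -{1}[y]submxcolK mul_mxblock_mxrow; apply: eq_mxcol => i.
  under eq_bigr do rewrite bterm.
  rewrite !big_split /=; congr (_ + _ + _).
  - rewrite (bigD1 i) //= eqxx big1 ?addr0; last first.
      by move=> j ne; case: eqP => // e; case/eqP: ne; apply: val_inj.
    by rewrite /Yof inord_val.
  - case eqi: (nat_of_ord i) => [|i'].
      by rewrite big1 // => j _.
    have lt : (i' < k.+1)%N by have := ltn_ord i; lia.
    rewrite (bigD1 (@inord k i')) /=; last by [].
    rewrite inordK //; case: eqP => [_|]; last by [].
    rewrite big1 ?addr0 //.
    move=> j ne; case: eqP => // e; case/eqP: ne; apply: val_inj.
    by rewrite /= inordK //; lia.
  - rewrite (big_ord_widen k.+1 (fun j => Mt i j *m Yof y j)); last first.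
      by have := ltn_ord i; lia.
    rewrite [RHS]big_mkcond /=; apply: eq_bigr => j _.
    by rewrite /Yof inord_val.
rewrite E; split.
  by move=> h i; have := congr1 (fun z => submxcol z i) h; rewrite mxcolK submxcol0.
by move=> h; apply/mxcolP => i; rewrite mxcolK submxcol0 h.
Qed.

Lemma NN_ker (y : 'cV[R]_(\sum_(i < k.+1) n)) :
  NN *m y = 0 <->
  (Nt *m mxprod 2 k.+2 Q *m submxcol y ord_max = 0 /\
   forall i : 'I_k.+1, (i < k)%N ->
     submxcol y i = (-1) ^+ (k - i) *: (mxprod i.+2 k.+2 Q *m submxcol y ord_max)).
Proof.
have Ymax : Yof y k = submxcol y ord_max.
  by rewrite /Yof; congr submxcol; apply: val_inj; rewrite /= inordK.
have Yi : forall i : 'I_k.+1, Yof y i = submxcol y i.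
  by move=> i; rewrite /Yof inord_val.
have KI := kerind nu0 hN hM (Yof y) (leqnn k).
rewrite NN_rows; split.
- move=> H.
  have RH : RHSi Nt Mt k (Yof y) k.
    apply/KI => i' hi'; have := H (@inord k i'); rewrite inordK //; lia.
  have r0 := H ord0; rewrite /rowe /= big_ord0 !addr0 in r0.
  rewrite (RH 0%N) // Ymax in r0.
  split.
    move/eqP: r0; rewrite -scalemxAr scaler_eq0 expf_eq0 oppr_eq0 oner_eq0 andbF /=.
    by rewrite mulmxA => /eqP.
  by move=> i hi; rewrite -Yi -Ymax; apply: RH.
- move=> [H0 H].
  have RH : RHSi Nt Mt k (Yof y) k.
    move=> j hj; have := H (@inord k j); rewrite inordK; last lia.
    by rewrite -Ymax /Yof => ->.
  move=> i; case: (posnP i) => hi.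
    rewrite /rowe hi /= big_ord0 !addr0 (RH 0%N) // Ymax.
    by rewrite -scalemxAr mulmxA H0 scaler0.
  by apply: (proj2 KI RH); have := ltn_ord i; lia.
Qed.

End Ker.

Section RankKer.
Variable F : fieldType.

Lemma colkerT m1 (A : 'M[F]_m1) (u : 'rV[F]_m1) :
  (u <= kermx A^T)%MS -> A *m u^T = 0.
Proof.
move/sub_kermxP => hu.
by have := congr1 trmx hu; rewrite trmx_mul trmxK trmx0.
Qed.

Lemma colkerT' m1 (A : 'M[F]_m1) (u : 'rV[F]_m1) :
  A *m u^T = 0 -> (u <= kermx A^T)%MS.
Proof.
move=> h; apply/sub_kermxP.
by have := congr1 trmx h; rewrite trmx_mul trmxK trmx0.
Qed.

Lemma colker_rank m1 m2 (A : 'M[F]_m1) (B : 'M[F]_m2)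
    (T : 'M[F]_(m1, m2)) (S : 'M[F]_(m2, m1)) :
  S *m T = 1%:M ->
  (forall y : 'cV_m1, A *m y = 0 -> y = T *m (S *m y) /\ B *m (S *m y) = 0) ->
  (forall z : 'cV_m2, B *m z = 0 -> A *m (T *m z) = 0) ->
  (m1 - \rank A = m2 - \rank B)%N.
Proof.
move=> ST h1 h2.
rewrite -(mxrank_tr A) -(mxrank_tr B) -!mxrank_ker.
apply/eqP; rewrite eqn_leq; apply/andP; split.
- apply: leq_trans (mxrankS _) (mxrankM_maxl _ T^T).
  apply/row_subP => i.
  have hy := colkerT (row_sub i (kermx A^T)).
  have [e1 e2] := h1 _ hy.
  have -> : row i (kermx A^T) = (S *m (row i (kermx A^T))^T)^T *m T^T.
    by rewrite -trmx_mul -e1 trmxK.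
  apply: submxMr; apply: colkerT'; rewrite trmxK; exact: e2.
- apply: leq_trans (mxrankS _) (mxrankM_maxl _ S^T).
  apply/row_subP => i.
  have hz := colkerT (row_sub i (kermx B^T)).
  have := h2 _ hz => hA.
  have -> : row i (kermx B^T) = (T *m (row i (kermx B^T))^T)^T *m S^T.
    by rewrite -trmx_mul mulmxA ST mul1mx trmxK.
  apply: submxMr; apply: colkerT'; rewrite trmxK; exact: hA.
Qed.

Lemma rank_same_colker m (A B : 'M[F]_m) :
  (forall x : 'cV_m, A *m x = 0 <-> B *m x = 0) -> \rank A = \rank B.
Proof.
move=> h.
have := @colker_rank m m A B 1%:M 1%:M (mul1mx _).
have H1 : forall y : 'cV_m, A *m y = 0 -> y = 1%:M *m (1%:M *m y) /\ B *m (1%:M *m y) = 0.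
  by move=> y hy; rewrite !mul1mx; split => //; apply/h.
have H2 : forall z : 'cV_m, B *m z = 0 -> A *m (1%:M *m z) = 0.
  by move=> z hz; rewrite mul1mx; apply/h.
move=> /(_ H1 H2).
have := rank_leq_row A; have := rank_leq_row B; lia.
Qed.

Lemma rank_same_rowker m (A B : 'M[F]_m) :
  (forall u : 'rV_m, u *m A = 0 <-> u *m B = 0) -> \rank A = \rank B.
Proof.
move=> h; rewrite -(mxrank_tr A) -(mxrank_tr B); apply: rank_same_colker => x.
have E : forall C : 'M[F]_m, C^T *m x = 0 <-> x^T *m C = 0.
  move=> C; split => e.
    by have := congr1 trmx e; rewrite trmx_mul trmxK trmx0.
  by have := congr1 trmx e; rewrite trmx_mul trmxK trmx0.
by rewrite !E.
Qed.

End RankKer.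

Section Inj.
Variable R : realType.
Variable nu : nat.
Variable p : 'I_nu -> nat.
Local Notation n := (bsize p).
Local Notation blk A i j := (@submxblock R nu nu p p A i j).

Definition colinj m (Q : 'M[R]_n) := forall i j : 'I_nu, j = (i + m)%N :> nat ->
  forall x : 'cV[R]_(p j), blk Q i j *m x = 0 -> x = 0.
Definition rowinj m (Q : 'M[R]_n) := forall i j : 'I_nu, j = (i + m)%N :> nat ->
  forall u : 'rV[R]_(p i), u *m blk Q i j = 0 -> u = 0.

Lemma blk_prod a b (A B : 'M[R]_n) (i l j : 'I_nu) :
  sutd a A -> sutd b B -> l = (i + a)%N :> nat -> j = (l + b)%N :> nat ->
  blk (A *m B) i j = blk A i l *m blk B l j.
Proof.
move=> hA hB el ej; rewrite submxblockM (bigD1 l) //= big1 ?addr0 // => l' ne.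
have ne' : nat_of_ord l' != nat_of_ord l by [].
case: (ltnP l' (i + a)) => h; first by rewrite hA // mul0mx.
by rewrite hB ?mulmx0 //; move/eqP: ne'; lia.
Qed.

Lemma colinjM a b (A B : 'M[R]_n) : sutd a A -> sutd b B ->
  colinj a A -> colinj b B -> colinj (a + b) (A *m B).
Proof.
move=> hA hB cA cB i j e x.
have lt : (i + a < nu)%N by have := ltn_ord j; lia.
rewrite (blk_prod (l := Ordinal lt) hA hB) //=; last lia.
rewrite -mulmxA => h; apply: (cB (Ordinal lt)) => //=; first lia.
exact: (cA i (Ordinal lt)).
Qed.

Lemma rowinjM a b (A B : 'M[R]_n) : sutd a A -> sutd b B ->
  rowinj a A -> rowinj b B -> rowinj (a + b) (A *m B).
Proof.
move=> hA hB cA cB i j e u.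
have lt : (i + a < nu)%N by have := ltn_ord j; lia.
rewrite (blk_prod (l := Ordinal lt) hA hB) //=; last lia.
rewrite mulmxA => h; apply: (cA i (Ordinal lt)) => //=.
by apply: (cB (Ordinal lt) j) => //=; lia.
Qed.

Lemma submxcolM (Q : 'M[R]_n) (x : 'cV[R]_n) i :
  submxcol (Q *m x) i = \sum_j blk Q i j *m submxcol x j.
Proof.
by rewrite -{1}[Q]submxblockK -{1}[x]submxcolK mul_mxblock_mxrow mxcolK.
Qed.

Lemma submxrowM (Q : 'M[R]_n) (u : 'rV[R]_n) j :
  submxrow (u *m Q) j = \sum_i submxrow u i *m blk Q i j.
Proof.
by rewrite -{1}[Q]submxblockK -{1}[u]submxrowK mul_mxrow_mxblock mxrowK.
Qed.

Lemma ker_col m (Q : 'M[R]_n) : sutd m Q -> colinj m Q ->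
  forall x : 'cV[R]_n, Q *m x = 0 <-> forall j : 'I_nu, (m <= j)%N -> submxcol x j = 0.
Proof.
move=> hQ cQ x; split => [h|h].
  suff H : forall d (j : 'I_nu), (m <= j)%N -> (nu <= j + d)%N -> submxcol x j = 0.
    by move=> j hj; apply: (H nu j hj); rewrite leq_addl.
  elim=> [|d IH] j hj hd; first by have := ltn_ord j; lia.
  have lt : (j - m < nu)%N by have := ltn_ord j; lia.
  have := congr1 (fun z => submxcol z (Ordinal lt)) h.
  rewrite submxcolM submxcol0 (bigD1 j) //= big1 ?addr0.
    by apply: (cQ (Ordinal lt) j) => /=; lia.
  move=> j' ne; have ne' : nat_of_ord j' != nat_of_ord j by [].
  case: (ltnP j' j) => hj'; first by rewrite hQ ?mul0mx //=; lia.
  by rewrite IH ?mulmx0 //; move/eqP: ne'; lia.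
apply/mxcolP => i; rewrite submxcolM submxcol0 big1 // => j _.
case: (ltnP j (i + m)) => hj; first by rewrite hQ // mul0mx.
by rewrite h ?mulmx0 //; lia.
Qed.

Lemma ker_row m (Q : 'M[R]_n) : sutd m Q -> rowinj m Q ->
  forall u : 'rV[R]_n, u *m Q = 0 <-> forall i : 'I_nu, (i + m < nu)%N -> submxrow u i = 0.
Proof.
move=> hQ cQ u; split => [h|h].
  suff H : forall d (i : 'I_nu), (i < d)%N -> (i + m < nu)%N -> submxrow u i = 0.
    by move=> i hi; apply: (H nu) => //.
  elim=> [|d IH] i hi hd; first lia.
  have := congr1 (fun z => submxrow z (Ordinal hd)) h.
  rewrite submxrowM submxrow0 (bigD1 i) //= big1 ?addr0.
    by apply: (cQ i (Ordinal hd)).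
  move=> i' ne; have ne' : nat_of_ord i' != nat_of_ord i by [].
  case: (ltnP i' i) => hi'; first by rewrite IH ?mul0mx //; lia.
  by rewrite hQ ?mulmx0 //=; move/eqP: ne'; lia.
apply/mxrowP => j; rewrite submxrowM submxrow0 big1 // => i _.
case: (ltnP j (i + m)) => hj; first by rewrite hQ // mulmx0.
by rewrite h ?mul0mx //; have := ltn_ord j; lia.
Qed.

Lemma colinj1 (A : 'M[R]_n) : (forall i j : 'I_nu, j = i.+1 :> nat ->
  \rank (blk A i j) = p j) -> colinj 1 A.
Proof.
move=> h i j e x hx.
have rf : row_free (blk A i j)^T by rewrite /row_free mxrank_tr h ?eqxx // e addn1.
have : x^T *m (blk A i j)^T == 0 by rewrite -trmx_mul hx trmx0.
rewrite mulmx_free_eq0 // => /eqP e0.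
by have := congr1 trmx e0; rewrite trmxK trmx0.
Qed.

Lemma rowinj1 (A : 'M[R]_n) : (forall i j : 'I_nu, j = i.+1 :> nat ->
  \rank (blk A i j) = p i) -> rowinj 1 A.
Proof.
move=> h i j e u hu.
have rf : row_free (blk A i j) by rewrite /row_free h ?eqxx // e addn1.
by apply/eqP; rewrite -(mulmx_free_eq0 _ rf) hu.
Qed.

Variable Pj : nat -> 'M[R]_n -> Prop.
Hypothesis hPj : forall a b (A B : 'M[R]_n), sutd a A -> sutd b B ->
  Pj a A -> Pj b B -> Pj (a + b) (A *m B).

Lemma prodNP (N : 'M[R]_n) (Q : nat -> 'M[R]_n) b :
  sutd 1 N -> Pj 1 N -> (forall s, (2 <= s < b)%N -> sutd 1 (Q s) /\ Pj 1 (Q s)) ->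
  (2 <= b)%N -> sutd b.-1 (N *m mxprod 2 b Q) /\ Pj b.-1 (N *m mxprod 2 b Q).
Proof.
move=> hN pN hQ; elim: b hQ => [|b IH] hQ hb; first lia.
case: (ltnP b 2) => hb2.
  have -> : b = 1%N by lia.
  by rewrite mxprod_nil mulmx1.
have [s1 p1] := IH (fun s hs => hQ s (ltac:(lia))) hb2.
have [s2 p2] := hQ b (ltac:(lia)).
rewrite mxprod_recr; last lia.
rewrite mulmxA /=; have E : b = (b.-1 + 1)%N by lia.
by split; rewrite {1}E; [apply: sutdM| apply: hPj].
Qed.

Lemma powP (N : 'M[R]_n) e : sutd 1 N -> Pj 1 N -> (1 <= e)%N ->
  sutd e (mxpow N e) /\ Pj e (mxpow N e).
Proof.
move=> hN pN; elim: e => [|e IH] he; first lia.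
case: (posnP e) => he0.
  by rewrite he0 /mxpow /= mulmx1.
have [s1 p1] := IH he0.
rewrite /mxpow iterS -/(mxpow N e) -add1n.
by split; [apply: sutdM| apply: hPj].
Qed.

End Inj.

Lemma Gs_cont (R : realType) (I : interval R) (nu : nat) (p : 'I_nu -> nat) k
  (N : R -> 'M[R]_(bsize p)) (M : nat -> nat -> R -> 'M[R]_(bsize p)) :
  mxcont I N -> (forall i j, (j < i <= k)%N -> mxcont I (M i j)) ->
  forall k' s, (k' <= k)%N ->
  mxcont I (fun t => Gs (N t) (fun i j => M i j t) k' s).
Proof.
move=> hN hM; elim=> [|k' IH] s le /=; first exact: mxcontC.
case: (s == k'.+2); last by apply: IH; lia.
apply: mxcontM => //; rewrite /uinv.
apply: mxcont_sum => m; apply: mxcontX; apply: mxcontN.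
rewrite /Xc /=; apply: mxcontD; first by apply: hM; lia.
apply: mxcont_sum => j; apply: mxcontZ; apply: mxcontM.
  by apply: hM; have := ltn_ord j; lia.
by apply: mxcont_prod => s'; apply: IH; lia.
Qed.

Unset Implicit Arguments.
Theorem mainTheorem18 (R : realType) (I : interval R) (nu : nat)
  (p : 'I_nu -> nat) (k : nat)
  (N : R -> 'M[R]_(bsize p)) (M : nat -> nat -> R -> 'M[R]_(bsize p)) :
  (2 <= nu)%N -> (forall i, (0 < p i)%N) -> (1 <= k)%N ->
  SUT I N -> mxcont I N ->
  (forall i j : nat, (j < i <= k)%N -> SUT I (M i j) /\ mxcont I (M i j)) ->
  let NN := fun t => bigNk k (N t) (fun i j => M i j t) in
  (exists Nt : nat -> R -> 'M[R]_(bsize p),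
     (forall s, (2 <= s <= k.+1)%N ->
        [/\ SUT I (Nt s), mxcont I (Nt s) &
            forall t, t \in I -> forall i j : 'I_nu, j = i.+1 :> nat ->
              submxblock (Nt s t) i j = submxblock (N t) i j]) /\
     let P := fun t => mxprod 2 k.+2 (fun s => Nt s t) in
     forall t, t \in I ->
       [/\ (forall y : 'cV[R]_(\sum_(i < k.+1) bsize p),
              NN t *m y = 0 <->
              (N t *m P t *m submxcol y ord_max = 0 /\
               forall i : 'I_k.+1, (i < k)%N ->
                 submxcol y i =
                 (-1) ^+ (k - i) *: (mxprod i.+2 k.+2 (fun s => Nt s t)
                                     *m submxcol y ord_max))),
           \rank (cokermx (NN t)) = \rank (cokermx (N t *m P t)) &
           \rank (NN t) = (k * bsize p + \rank (N t *m P t))%N]) /\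
  (SUT_column I N \/ SUT_row I N ->
     (forall t, t \in I -> \rank (NN t) = (k * bsize p + \rank (mxpow (N t) k.+1))%N)
     /\ exists r : nat, forall t, t \in I -> \rank (NN t) = r).
Proof.
move=> nu2 p0 k1 hSN hcN hM NN.
have nu0 : (0 < nu)%N by lia.
set Ntf := fun s t => Gs (N t) (fun i j => M i j t) k s.
have hNt : forall t, t \in I -> sutd 1 (N t).
  by move=> t ht i j lt; apply: hSN => //; lia.
have hMt : forall t, t \in I -> forall i j, (j < i <= k)%N -> sutd 1 (M i j t).
  by move=> t ht i j hij i' j' lt; apply: (proj1 (hM i j hij)) => //; lia.
pose Qt t := Gs (N t) (fun i j => M i j t) k.
pose Pt t := mxprod 2 k.+2 (Qt t).
have Hker : forall t, t \in I -> forall y : 'cV[R]_(\sum_(i < k.+1) bsize p),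
   NN t *m y = 0 <->
   (N t *m Pt t *m submxcol y ord_max = 0 /\
    forall i : 'I_k.+1, (i < k)%N ->
      submxcol y i = (-1) ^+ (k - i) *: (mxprod i.+2 k.+2 (Qt t) *m submxcol y ord_max)).
  by move=> t ht y; apply: NN_ker => //; [exact: hNt| exact: hMt].
have Hck : forall t, t \in I ->
   ((\sum_(i < k.+1) bsize p) - \rank (NN t) = bsize p - \rank (N t *m Pt t))%N.
  move=> t ht.
  pose C (j : 'I_k.+1) := (-1) ^+ (k - j) *: mxprod j.+2 k.+2 (Qt t).
  pose T : 'M[R]_(\sum_(i < k.+1) bsize p, bsize p) := \mxcol_j C j.
  pose S : 'M[R]_(bsize p, \sum_(i < k.+1) bsize p) :=
    \mxrow_(j < k.+1) (if j == ord_max then 1%:M else 0).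
  have Cmax : C ord_max = 1%:M by rewrite /C /= subnn expr0 scale1r mxprod_nil.
  have Sy : forall y : 'cV[R]_(\sum_(i < k.+1) bsize p), S *m y = submxcol y ord_max.
    move=> y; rewrite -{1}[y]submxcolK mul_mxrow_mxcol (bigD1 ord_max) //= eqxx mul1mx.
    by rewrite big1 ?addr0 // => j /negbTE ->; rewrite mul0mx.
  have Tz : forall (z : 'cV[R]_(bsize p)) j, submxcol (T *m z) j = C j *m z.
    by move=> z j; rewrite -submxcol_mul mxcolK.
  apply: (@colker_rank _ _ _ (NN t) (N t *m Pt t) T S).
  - rewrite mul_mxrow_mxcol (bigD1 ord_max) //= eqxx mul1mx Cmax.
    by rewrite big1 ?addr0 // => j /negbTE ->; rewrite mul0mx.
  - move=> y /(Hker t ht) [H0 H]; rewrite Sy; split => //.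
    apply/mxcolP => j; rewrite Tz; case: (ltnP j k) => hj; first by rewrite (H j hj) /C scalemxAl.
    have -> : j = ord_max by apply: val_inj => /=; have := ltn_ord j; lia.
    by rewrite Cmax mul1mx.
  - move=> z hz; apply/(Hker t ht); rewrite !Tz Cmax mul1mx; split => //.
    by move=> i hi; rewrite Tz /C scalemxAl.
have Hrank : forall t, t \in I -> \rank (NN t) = (k * bsize p + \rank (N t *m Pt t))%N.
  move=> t ht; have := Hck t ht.
  have Es : (\sum_(i < k.+1) bsize p = k.+1 * bsize p)%N.
    by rewrite big_const_ord iter_addn_0 mulnC.
  have := rank_leq_row (N t *m Pt t).
  have := rank_leq_row (NN t).
  move: (\rank (NN t)) (\rank (N t *m Pt t)) => r1 r2.
  move: (\sum_(i < k.+1) bsize p)%N Es => sz Es.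
  lia.
split.
  exists Ntf; split.
    move=> s hs; split.
    - move=> t ht i j lt; apply: (Gs_sutd nu0 (hNt t ht) (hMt t ht)) => //; lia.
    - apply: (Gs_cont (k:=k) hcN _ (leqnn k)) => i j hij; exact: (proj2 (hM i j hij)).
    - move=> t ht i j e; apply: (Gs_super nu0 (hNt t ht) (hMt t ht)) => //.
  move=> P t ht; split.
  - exact: Hker.
  - by rewrite !mxrank_coker; exact: Hck.
  - exact: Hrank.
move=> hcr.
have HQs : forall t, t \in I -> forall s, (2 <= s <= k.+1)%N ->
    sutd 1 (Qt t s) /\ forall i j : 'I_nu, j = i.+1 :> nat ->
      submxblock (Qt t s) i j = submxblock (N t) i j.
  move=> t ht s hs; split.
    exact: (Gs_sutd nu0 (hNt t ht) (hMt t ht) s (leqnn k)).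
  by move=> i j e; apply: (Gs_super nu0 (hNt t ht) (hMt t ht)).
have Hpow : forall t, t \in I ->
   \rank (N t *m Pt t) = \rank (mxpow (N t) k.+1) /\
   forall t', t' \in I -> \rank (mxpow (N t) k.+1) = \rank (mxpow (N t') k.+1).
  move=> t ht; case: hcr => [[_ [_ hr]]|[_ [_ hr]]].
  - have cN : forall t, t \in I -> colinj 1 (N t).
      by move=> t' ht'; apply: colinj1 => i j e; apply: hr.
    have Pw : forall t, t \in I -> sutd k.+1 (mxpow (N t) k.+1) /\
        colinj k.+1 (mxpow (N t) k.+1).
      move=> t' ht'; apply: powP => //; [exact: colinjM| exact: hNt| exact: cN].
    have [s1 c1] : sutd k.+1 (N t *m Pt t) /\ colinj k.+1 (N t *m Pt t).
      apply: (@prodNP _ _ _ _ (@colinjM R nu p) (N t) (Qt t) k.+2) => //; [exact: hNt| exact: cN|].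
      move=> s hs; have [h1 h2] := HQs t ht s (ltac:(lia)); split => //.
      apply: colinj1 => i j e; rewrite h2 //; exact: hr.
    have [s2 c2] := Pw t ht.
    split.
      apply: rank_same_colker => x.
      apply: (iff_trans (ker_col s1 c1 x)); apply: iff_sym; exact: (ker_col s2 c2 x).
    move=> t' ht'; have [s3 c3] := Pw t' ht'.
    apply: rank_same_colker => x.
    apply: (iff_trans (ker_col s2 c2 x)); apply: iff_sym; exact: (ker_col s3 c3 x).
  - have cN : forall t, t \in I -> rowinj 1 (N t).
      by move=> t' ht'; apply: rowinj1 => i j e; apply: hr.
    have Pw : forall t, t \in I -> sutd k.+1 (mxpow (N t) k.+1) /\
        rowinj k.+1 (mxpow (N t) k.+1).
      move=> t' ht'; apply: powP => //; [exact: rowinjM| exact: hNt| exact: cN].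
    have [s1 c1] : sutd k.+1 (N t *m Pt t) /\ rowinj k.+1 (N t *m Pt t).
      apply: (@prodNP _ _ _ _ (@rowinjM R nu p) (N t) (Qt t) k.+2) => //; [exact: hNt| exact: cN|].
      move=> s hs; have [h1 h2] := HQs t ht s (ltac:(lia)); split => //.
      apply: rowinj1 => i j e; rewrite h2 //; exact: hr.
    have [s2 c2] := Pw t ht.
    split.
      apply: rank_same_rowker => x.
      apply: (iff_trans (ker_row s1 c1 x)); apply: iff_sym; exact: (ker_row s2 c2 x).
    move=> t' ht'; have [s3 c3] := Pw t' ht'.
    apply: rank_same_rowker => x.
    apply: (iff_trans (ker_row s2 c2 x)); apply: iff_sym; exact: (ker_row s3 c3 x).
split.
  by move=> t ht; rewrite Hrank // (proj1 (Hpow t ht)).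
case: (pselect (exists t, t \in I)) => [[t0 h0]|nex].
  exists (\rank (NN t0)) => t ht.
  rewrite !Hrank // (proj1 (Hpow t ht)) (proj1 (Hpow t0 h0)).
  by rewrite (proj2 (Hpow t ht) t0 h0).
by exists 0%N => t ht; exfalso; apply: nex; exists t.
Qed.
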